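(* Let $X$ be a real random variable with density $p$, $\mathbb{E}X=0$, $\mathrm{Var}(X)=1$, $\mathbb{E}|X|^s<\infty$ for some $s>2$, and $\|p-\phi\|_\infty\le1/2$. Then there exists $C_1>0$ such that for every $\varepsilon>0$, \[ D(X)\le C_1(\mathbb{E}|X|^s)^{2/s}\Big(\sqrt{|\ln\|p-\phi\|_\infty|}\,\|p-\phi\|_\infty\Big)^{1-2/s}\le C_1M(\varepsilon)(\mathbb{E}|X|^s)^{2/s}\|p-\phi\|_\infty^{(1-2/s)(1-\varepsilon)}, \] where $M(\varepsilon):=\max_{x\in[0,1]}x^\varepsilon\sqrt{|\ln x|}+1<\infty$.
   Context: $\phi(x)=(2\pi)^{-1/2}e^{-x^2/2}$. $D(X)$ denotes the Kullback–Leibler divergence of $X$ from a Gaussian with the same mean and variance as $X$; here $D(X)=\int p\ln(p/\phi)$. $\|\cdot\|_\infty$ is the sup norm on $\mathbb{R}$. *)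

(* Defs.v *)
From HB Require Import structures.
From mathcomp Require Import all_boot all_order all_algebra.
From mathcomp Require Import all_classical all_reals all_analysis.
Set Implicit Arguments. Unset Strict Implicit. Unset Printing Implicit Defensive.
Import Order.TTheory GRing.Theory Num.Theory.
Import numFieldNormedType.Exports.
Local Open Scope classical_set_scope.
Local Open Scope ring_scope.

Definition gauss_phi (R : realType) (x : R) : R :=
  (Num.sqrt (2 * pi))^-1 * expR (- (x ^+ 2) / 2).

Definition supnorm_diff (R : realType) (p : R -> R) : \bar R :=
  ereal_sup [set (`|p x - gauss_phi x|)%:E | x in [set: R]].

(* D(X) = \int p ln (p / phi)  (with the convention 0 ln 0 = 0, as ln 0 = 0) *)
Definition KL_gauss (R : realType) (p : R -> R) : \bar R :=
  (\int[@lebesgue_measure R]_x (p x * ln (p x / gauss_phi x))%:E)%E.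

Definition abs_moment (R : realType) (p : R -> R) (s : R) : \bar R :=
  (\int[@lebesgue_measure R]_x ((`|x| `^ s) * p x)%:E)%E.

Definition Meps (R : realType) (eps : R) : R :=
  sup [set x `^ eps * Num.sqrt `|ln x| | x in `[0, 1]] + 1.

(* Main.v *)
Require Import Defs.
From HB Require Import structures.
From mathcomp Require Import all_boot all_order all_algebra.
From mathcomp Require Import all_classical all_reals all_analysis.
From mathcomp Require Import ring lra measurable_realfun.
Import Order.TTheory GRing.Theory Num.Theory.
Import numFieldNormedType.Exports.
Local Open Scope classical_set_scope.
Local Open Scope ring_scope.

Section RealFacts.
Context {R : realType}.
Implicit Types x y u v d e : R.

Lemma yexp_le1 y : y * expR (- y) <= 1.
Proof.
have h1 : y <= expR y by have := expR_ge1Dx y; lra.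
have h2 : 0 < expR (- y) := expR_gt0 _.
have -> : 1 = expR y * expR (- y) by rewrite -expRD subrr expR0.
by rewrite ler_pM2r.
Qed.

Lemma xpow_ln e x : 0 < e -> 0 < x <= 1 -> x `^ e * (- ln x) <= e^-1.
Proof.
move=> e0 /andP[x0 x1].
have -> : x `^ e = expR (- (- e * ln x)).
  by rewrite /powR gt_eqF// mulNr opprK.
have := yexp_le1 (- e * ln x).
rewrite mulrC => h.
have -> : expR (- (- e * ln x)) * - ln x = e^-1 * (expR (- (- e * ln x)) * (- e * ln x)).
  by field; rewrite gt_eqF.
by rewrite -[leRHS]mulr1 ler_wpM2l// invr_ge0 ltW.
Qed.

Lemma conv_tlnt u v : 0 < u -> 0 <= v -> u * ln u - v * ln v <= (u - v) * (ln u + 1).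
Proof.
move=> u0; rewrite le_eqVlt => /predU1P[<-|v0].
  by rewrite mul0r !subr0 mulrDr mulr1 lerDl ltW.
have : ln (u / v) <= u / v - 1.
  have hx : -1 < u / v - 1 by have := divr_gt0 u0 v0; lra.
  by have := le_ln1Dx hx; rewrite addrC subrK.
rewrite ln_div ?posrE// => hl.
have : v * (ln u - ln v) <= v * (u / v - 1) by rewrite ler_wpM2l// ltW.
rewrite mulrBr mulrBr mulr1 mulrCA divff ?gt_eqF// mulr1 => hv.
suff : 0 <= (u - v) * (ln u + 1) - (u * ln u - v * ln v) by rewrite subr_ge0.
have -> : (u - v) * (ln u + 1) - (u * ln u - v * ln v) = (u - v) - (v * ln u - v * ln v) by ring.
by rewrite subr_ge0.
Qed.

Lemma tlnt_le0 u : 0 <= u <= 1 -> u * ln u <= 0.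
Proof. by move=> /andP[u0 u1]; rewrite mulr_ge0_le0// ln_le0. Qed.

Lemma modulus_tlnt u v d e : 0 <= u <= 1 -> 0 <= v <= 1 -> `|u - v| <= d ->
  0 < d -> d <= 2^-1 -> 0 < e < 1 ->
  u * ln u - v * ln v <= 3 / e * d `^ (1 - e).
Proof.
move=> /andP[u0 u1] /andP[v0 v1] uvd d0 d12 /andP[e0 e1].
have d1 : d <= 1 by apply: (le_trans d12); rewrite invf_le1// ler1n.
have dpow : d <= d `^ (1 - e) by apply: ger1_powR; [rewrite d0 d1| lra].
have dpow0 : 0 <= d `^ (1 - e) := powR_ge0 _ _.
have e3 : 1 <= 3 / e by rewrite ler_pdivlMr//; lra.
have hd3 : d `^ (1 - e) <= 3 / e * d `^ (1 - e) by rewrite ler_peMl.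
have dsplit : d = d `^ (1 - e) * d `^ e.
  have := @powRD R d (1 - e) e; rewrite (gt_eqF d0) implybT subrK powRr1 ?ltW//.
  by move=> /(_ isT).
have [uv|vu] := leP v u.
  have [u00|u0'] := eqVneq u 0.
    have v00 : v = 0 by apply/le_anti; rewrite v0 -u00 uv.
    by rewrite u00 v00 subrr mulr_ge0// divr_ge0// ltW.
  have u0p : 0 < u by rewrite lt_neqAle eq_sym u0' u0.
  apply: (le_trans (conv_tlnt _ _ u0p v0)).
  have hl : ln u <= 0 := ln_le0 u1.
  have : (u - v) * (ln u + 1) <= u - v by rewrite -[leRHS]mulr1 ler_wpM2l ?subr_ge0//; lra.
  move=> h; apply: (le_trans h); apply: (le_trans _ hd3); apply: (le_trans _ dpow).
  by move: uvd; rewrite ger0_norm ?subr_ge0.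
have [du|ud] := leP d u.
  have u0p : 0 < u by apply: (lt_le_trans d0 du).
  apply: (le_trans (conv_tlnt _ _ u0p v0)).
  have hl : - ln u <= - ln d by rewrite lerN2 ler_ln// posrE.
  have hl0 : 0 <= - ln u by rewrite oppr_ge0 ln_le0.
  have vud : v - u <= d by move: uvd; rewrite distrC ger0_norm ?subr_ge0// ltW.
  have : (u - v) * (ln u + 1) <= (v - u) * (- ln u).
    have -> : (u - v) * (ln u + 1) = (v - u) * (- ln u) - (v - u) by ring.
    by rewrite lerBlDr lerDl subr_ge0 ltW.
  move=> h; apply: (le_trans h).
  have : (v - u) * (- ln u) <= d * (- ln d).
    apply: ler_pM => //; first by rewrite subr_ge0 ltW.
  move=> h2; apply: (le_trans h2).
  rewrite {1}dsplit -mulrA.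
  have := @xpow_ln e d e0 ltac:(by rewrite d0 d1).
  move=> h3.
  have : d `^ (1 - e) * (d `^ e * - ln d) <= d `^ (1 - e) * e^-1 by rewrite ler_wpM2l.
  move=> h4; apply: (le_trans h4).
  rewrite mulrC ler_wpM2r// ler_pdivlMr// mulVf ?gt_eqF//; lra.
have hu : u * ln u <= 0 by apply: tlnt_le0; rewrite u0 u1.
have : u * ln u - v * ln v <= - (v * ln v) by lra.
move=> h; apply: (le_trans h).
have [v00|v0'] := eqVneq v 0.
  by rewrite v00 mul0r oppr0 mulr_ge0// divr_ge0// ltW.
have v0p : 0 < v by rewrite lt_neqAle eq_sym v0' v0.
have v2d : v <= 2 * d.
  have : v - u <= d by move: uvd; rewrite distrC ger0_norm // subr_ge0 ltW.
  lra.
have -> : - (v * ln v) = v `^ (1 - e) * (v `^ e * - ln v).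
  have := @powRD R v (1 - e) e; rewrite (gt_eqF v0p) implybT subrK powRr1 ?ltW//.
  by move=> /(_ isT) hh; rewrite mulrA -hh mulrN.
have h1 : v `^ e * - ln v <= e^-1 by apply: xpow_ln; rewrite ?v0p.
have h2 : v `^ (1 - e) <= 2 * d `^ (1 - e).
  apply: (@le_trans _ _ ((2 * d) `^ (1 - e))).
    by apply: ge0_ler_powR; rewrite ?nnegrE; lra.
  rewrite powRM; last 2 first; [lra|lra|].
  rewrite ler_wpM2r//; apply: ler1_powR; lra.
apply: (@le_trans _ _ (2 * d `^ (1 - e) * e^-1)).
  apply: ler_pM => //; [exact: powR_ge0|].
  rewrite mulr_ge0// ?oppr_ge0 ?ln_le0//; exact: powR_ge0.
rewrite mulrAC ler_wpM2r //; rewrite ler_wpM2r ?invr_ge0 ?ltW//; lra.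
Qed.
End RealFacts.


Section Gauss.
Context {R : realType}.
Implicit Types x y T : R.

Definition c0 : R := (Num.sqrt (2 * pi))^-1.
Definition LL : R := - ln c0.

Lemma c0_gt0 : 0 < c0.
Proof. by rewrite invr_gt0 sqrtr_gt0 mulr_gt0// pi_gt0. Qed.

Lemma c0_le1 : c0 <= 1.
Proof.
rewrite invf_le1 ?sqrtr_gt0 ?mulr_gt0 ?pi_gt0//.
have h : 1 <= 2 * pi :> R by have := @pi_ge2 R; lra.
by rewrite -[X in X <= _]sqrtr1 ler_sqrt// ltW// (lt_le_trans ltr01 h).
Qed.

Lemma LL_ge0 : 0 <= LL.
Proof. by rewrite /LL oppr_ge0 ln_le0// c0_le1. Qed.

Lemma phiE x : gauss_phi x = c0 * expR (- x ^+ 2 / 2).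
Proof. by []. Qed.

Lemma phi_gt0 x : 0 < gauss_phi x.
Proof. by rewrite phiE mulr_gt0 ?c0_gt0 ?expR_gt0. Qed.


Lemma ln_phi x : ln (gauss_phi x) = - LL - x ^+ 2 / 2.
Proof.
rewrite phiE lnM ?posrE ?c0_gt0 ?expR_gt0// expRK /LL opprK mulNr.
by [].
Qed.

Lemma normal_pdf_eq (sg : R) x : sg != 0 ->
  normal_pdf 0 sg x = normal_peak sg * expR (- x ^+ 2 / (sg ^+ 2 *+ 2)).
Proof. by move=> s0; rewrite /normal_pdf (negbTE s0) /normal_fun subr0. Qed.

Lemma normal_peak_eq (sg : R) : 0 < sg -> normal_peak sg = c0 / sg.
Proof.
move=> s0; rewrite /normal_peak /c0.
have -> : sg ^+ 2 * pi *+ 2 = sg ^+ 2 * (2 * pi) by rewrite -mulr_natr; ring.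
rewrite sqrtrM ?sqr_ge0// sqrtr_sqr ger0_norm ?ltW//.
by rewrite invfM mulrC.
Qed.

Definition Ktail : R := c0 * (LL + 2) / normal_peak 2.

Lemma Ktail_ge0 : 0 <= Ktail.
Proof.
rewrite /Ktail divr_ge0 ?normal_peak_ge0// mulr_ge0 ?ltW ?c0_gt0//.
by have := LL_ge0; lra.
Qed.

Lemma tail_bound x T : 0 <= T -> T < `|x| ->
  gauss_phi x * (LL + x ^+ 2 / 2) <= Ktail * expR (- T ^+ 2 / 8) * normal_pdf 0 2 x.
Proof.
move=> T0 Tx.
rewrite normal_pdf_eq ?pnatr_eq0// phiE /Ktail.
have pk : 0 < normal_peak (2 : R) by rewrite normal_peak_gt0 ?pnatr_eq0.
have -> : (2 : R) ^+ 2 *+ 2 = 8 by rewrite -mulr_natr; ring.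
set y := x ^+ 2.
have y0 : 0 <= y by rewrite /y sqr_ge0.
have Ty : T ^+ 2 <= y.
  have hx : `|x| ^+ 2 = x ^+ 2 by rewrite -normrX ger0_norm ?sqr_ge0.
  rewrite /y -hx; nra.
have e1 : expR (- y / 2) = expR (- y / 8) * expR (- y / 8) * expR (- (y / 4)).
  by rewrite -!expRD; congr expR; field.
have e2 : expR (- (y / 4)) * (LL + y / 2) <= LL + 2.
  have := yexp_le1 (y / 4).
  have h1 : expR (- (y / 4)) <= 1 by rewrite expR_le1 oppr_le0 divr_ge0.
  have := LL_ge0.
  have := expR_ge0 (- (y / 4)).
  nra.
have e3 : expR (- y / 8) <= expR (- T ^+ 2 / 8).
  rewrite ler_expR; lra.
have E0 := expR_ge0 (- y / 8).
have E1 := expR_ge0 (- (y / 4)).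
set B := expR (- y / 8).
set Tt := expR (- T ^+ 2 / 8).
set A := expR (- (y / 4)) * (LL + y / 2).
have A0 : 0 <= A by rewrite /A mulr_ge0// addr_ge0 ?LL_ge0 ?divr_ge0.
have key : A * B * B <= (LL + 2) * Tt * B.
  apply: ler_pM => //; first by rewrite mulr_ge0.
  by apply: ler_pM.
have -> : c0 * (LL + 2) / normal_peak 2 * Tt * (normal_peak 2 * B) =
   c0 * ((LL + 2) * Tt * B).
  by field; rewrite gt_eqF.
rewrite e1.
have -> : c0 * (B * B * expR (- (y / 4))) * (LL + y / 2) = c0 * (A * B * B)
  by rewrite /A; ring.
by rewrite ler_pM2l ?c0_gt0.
Qed.

Lemma phi_le1 x : gauss_phi x <= c0.
Proof.
rewrite phiE -[leRHS]mulr1 ler_pM2l ?c0_gt0//.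
by rewrite expR_le1 mulNr oppr_le0 mulr_ge0// sqr_ge0.
Qed.

End Gauss.


Section Pointwise.
Context {R : realType}.
Implicit Types x y T : R.

Lemma indic_sym T x : `|x| <= T -> \1_`[-T, T] x = 1 :> R.
Proof. by move=> h; rewrite indicE mem_set //= in_itv /= -ler_norml h. Qed.

Lemma indic_sym0 T x : T < `|x| -> \1_`[-T, T] x = 0 :> R.
Proof. by move=> h; rewrite indicE memNset //= in_itv /= -ler_norml leNgt h. Qed.

Lemma gibbs_pt (sg x : R) : 0 < sg ->
  gauss_phi x * (- ln sg + x ^+ 2 / 2 * (1 - sg ^-2)) <=
  normal_pdf 0 sg x - gauss_phi x.
Proof.
move=> s0.
set E := - ln sg + x ^+ 2 / 2 * (1 - sg ^-2).
have qE : normal_pdf 0 sg x = gauss_phi x * expR E.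
  rewrite normal_pdf_eq ?gt_eqF// normal_peak_eq// phiE.
  rewrite /E expRD expRN lnK ?posrE//.
  rewrite -!mulrA; congr (_ * _).
  rewrite mulrCA -expRD; congr (_ * expR _).
  by rewrite -mulr_natr; field; rewrite gt_eqF.
rewrite qE.
have h : gauss_phi x * (1 + E) <= gauss_phi x * expR E.
  by rewrite ler_pM2l ?phi_gt0 ?expR_ge1Dx.
rewrite mulrDr mulr1 in h; lra.
Qed.

Lemma tlnt_phi x : - (gauss_phi x * ln (gauss_phi x)) = gauss_phi x * (LL + x ^+ 2 / 2).
Proof. by rewrite ln_phi; ring. Qed.

Lemma kl_simpl u x : 0 <= u ->
  u * ln (u / gauss_phi x) = u * ln u + u * (LL + x ^+ 2 / 2).
Proof.
move=> u0.
have [->|u0'] := eqVneq u 0; first by rewrite !mul0r addr0.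
have up : 0 < u by rewrite lt_neqAle eq_sym u0' u0.
rewrite ln_div ?posrE ?phi_gt0// ln_phi; ring.
Qed.

Lemma kl_ident u x : 0 <= u ->
  u * ln (u / gauss_phi x) =
  (u * ln u - gauss_phi x * ln (gauss_phi x)) + (u - gauss_phi x) * (LL + x ^+ 2 / 2).
Proof.
move=> u0.
have h : u * ln (u / gauss_phi x) = u * ln u + u * (LL + x ^+ 2 / 2).
  have [->|u0'] := eqVneq u 0; first by rewrite !mul0r addr0.
  have up : 0 < u by rewrite lt_neqAle eq_sym u0' u0.
  rewrite ln_div ?posrE ?phi_gt0// ln_phi; ring.
rewrite h; have := tlnt_phi x; lra.
Qed.

Lemma main_pt (u x d e T : R) : 0 <= u <= 1 -> `|u - gauss_phi x| <= d ->
  0 < d -> d <= 2^-1 -> 0 < e < 1 -> 0 <= T ->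
  u * ln (u / gauss_phi x) <=
  3 / e * d `^ (1 - e) * \1_`[-T, T] x
  + @Ktail R * expR (- T ^+ 2 / 8) * normal_pdf 0 2 x
  + @LL R * (u - gauss_phi x) + x ^+ 2 / 2 * (u - gauss_phi x).
Proof.
move=> /andP[u0 u1] ud d0 d12 e01 T0.
rewrite kl_ident//.
have -> : (u - gauss_phi x) * (@LL R + x ^+ 2 / 2) =
  @LL R * (u - gauss_phi x) + x ^+ 2 / 2 * (u - gauss_phi x) by ring.
suff H : u * ln u - gauss_phi x * ln (gauss_phi x) <=
  3 / e * d `^ (1 - e) * \1_`[-T, T] x
  + @Ktail R * expR (- T ^+ 2 / 8) * normal_pdf 0 2 x by lra.
have tail0 : 0 <= @Ktail R * expR (- T ^+ 2 / 8) * normal_pdf 0 2 x.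
  by rewrite mulr_ge0 ?normal_pdf_ge0// mulr_ge0 ?Ktail_ge0 ?expR_ge0.
have [xT|Tx] := leP `|x| T.
  rewrite indic_sym// mulr1.
  suff : u * ln u - gauss_phi x * ln (gauss_phi x) <= 3 / e * d `^ (1 - e) by lra.
  apply: modulus_tlnt => //; first by rewrite u0.
  by rewrite ltW ?phi_gt0// (le_trans (phi_le1 _)) ?c0_le1.
rewrite indic_sym0// mulr0 add0r.
have h1 : u * ln u <= 0 by apply: tlnt_le0; rewrite u0.
have := tail_bound _ _ T0 Tx.
have := tlnt_phi x; lra.
Qed.

End Pointwise.


Section Integrals.
Context {R : realType}.
Local Notation mu := (@lebesgue_measure R).
Implicit Types f g h : R -> R.

Definition intg f := mu.-integrable [set: R] (EFin \o f).

Lemma intgD {f g} : intg f -> intg g -> intg (fun x => f x + g x).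
Proof.
move=> hf hg; have := integrableD measurableT hf hg.
by apply: eq_integrable => // x _ /=.
Qed.

Lemma intgZ k {f} : intg f -> intg (fun x => k * f x).
Proof.
move=> hf; have := integrableZl measurableT k hf.
by apply: eq_integrable => // x _ /=.
Qed.

Lemma intgB {f g} : intg f -> intg g -> intg (fun x => f x - g x).
Proof.
move=> hf hg; have := integrableB measurableT hf hg.
by apply: eq_integrable => // x _ /=.
Qed.

Lemma intD {f g} : intg f -> intg g ->
  (\int[mu]_x (f x + g x)%:E = \int[mu]_x (f x)%:E + \int[mu]_x (g x)%:E)%E.
Proof.
move=> hf hg; rewrite -(integralD_EFin measurableT hf hg).
by apply: eq_integral => x _.
Qed.

Lemma intB {f g} : intg f -> intg g ->
  (\int[mu]_x (f x - g x)%:E = \int[mu]_x (f x)%:E - \int[mu]_x (g x)%:E)%E.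
Proof.
move=> hf hg; rewrite -(integralB_EFin measurableT hf hg).
by apply: eq_integral => x _.
Qed.

Lemma intZ k {f} : intg f ->
  (\int[mu]_x (k * f x)%:E = k%:E * \int[mu]_x (f x)%:E)%E.
Proof.
move=> hf; rewrite -(integralZl measurableT hf k).
by apply: eq_integral => x _.
Qed.

Lemma int_le_meas {h g} : measurable_fun setT h -> measurable_fun setT g ->
  (forall x, h x <= g x) ->
  (\int[mu]_x (h x)%:E <= \int[mu]_x (g x)%:E)%E.
Proof.
move=> mh mg hg.
rewrite integralE [leRHS]integralE leeB//.
- apply: ge0_le_integral => //.
  + by apply/measurable_funepos/measurable_EFinP.
  + by apply/measurable_funepos/measurable_EFinP.
  + by move=> x _; apply: (funepos_le (D := setT)) => [y _|]; rewrite ?lee_fin ?in_setT.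
- apply: ge0_le_integral => //.
  + by apply/measurable_funeneg/measurable_EFinP.
  + by apply/measurable_funeneg/measurable_EFinP.
  + by move=> x _; apply: (funeneg_le (D := setT)) => [y _|]; rewrite ?lee_fin ?in_setT.
Qed.

Lemma intg_nonneg {f} : measurable_fun setT f -> (forall x, 0 <= f x) ->
  (\int[mu]_x (f x)%:E < +oo)%E -> intg f.
Proof.
move=> mf f0 fi; apply/integrableP; split; first exact/measurable_EFinP.
under eq_integral do rewrite /= ger0_norm ?f0//.
exact: fi.
Qed.

Lemma intg_fin {f} : intg f -> (\int[mu]_x (f x)%:E = (fine (\int[mu]_x (f x)%:E))%:E)%E.
Proof. by move=> hf; rewrite fineK// integrable_fin_num. Qed.

Lemma phi_normal : @gauss_phi R =1 normal_pdf 0 1.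
Proof.
move=> x; rewrite normal_pdf_eq ?oner_eq0// normal_peak_eq// phiE.
by rewrite expr1n divr1.
Qed.

Lemma intg_phi : intg (@gauss_phi R).
Proof.
have := integrable_normal_pdf (0 : R) 1.
by apply: eq_integrable => // x _ /=; rewrite phi_normal.
Qed.

Lemma int_phi : (\int[mu]_x (gauss_phi x)%:E = 1)%E.
Proof.
rewrite -(integral_normal_pdf 0 1); apply: eq_integral => x _.
by rewrite phi_normal.
Qed.

Lemma meas_phi : measurable_fun setT (@gauss_phi R).
Proof.
apply: (eq_measurable_fun (normal_pdf 0 1)) => [x _|].
  by rewrite phi_normal.
exact: measurable_normal_pdf.
Qed.

Lemma intg_N : intg (normal_pdf 0 2).
Proof. exact: integrable_normal_pdf. Qed.

Lemma x2phi_bound x : x ^+ 2 * gauss_phi x <= (4 * (@c0 R) / normal_peak 2) * normal_pdf 0 2 x.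
Proof.
rewrite normal_pdf_eq ?pnatr_eq0// phiE.
have pk : 0 < normal_peak (2 : R) by rewrite normal_peak_gt0 ?pnatr_eq0.
have -> : (2 : R) ^+ 2 *+ 2 = 8 by rewrite -mulr_natr; ring.
have -> : 4 * (@c0 R) / normal_peak 2 * (normal_peak 2 * expR (- x ^+ 2 / 8)) =
  (@c0 R) * (4 * expR (- x ^+ 2 / 8)) by field; rewrite gt_eqF.
rewrite mulrCA ler_pM2l ?c0_gt0//.
set y := x ^+ 2.
have y0 : 0 <= y by rewrite /y sqr_ge0.
have e1 : expR (- y / 2) = expR (- (y / 4)) * expR (- (y / 4)) by rewrite -expRD; congr expR; field.
have h1 := yexp_le1 (y / 4).
have h2 : expR (- (y / 4)) <= expR (- y / 8) by rewrite ler_expR; lra.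
have E0 := expR_ge0 (- (y / 4)).
rewrite e1.
have -> : y * (expR (- (y / 4)) * expR (- (y / 4))) = 4 * ((y / 4) * expR (- (y / 4))) * expR (- (y / 4)) by field.
apply: ler_pM => //.
- by rewrite mulr_ge0// mulr_ge0// divr_ge0.
- by rewrite -[leRHS]mulr1 ler_pM2l.
Qed.

Lemma meas_x2f {f} : measurable_fun setT f -> measurable_fun setT (fun x : R => x ^+ 2 * f x).
Proof.
move=> mf; apply: measurable_funM => //.
Qed.

Lemma intg_x2phi : intg (fun x => x ^+ 2 * gauss_phi x).
Proof.
apply: (@le_integrable _ _ _ mu _ measurableT _ (EFin \o (fun x => (4 * (@c0 R) / normal_peak 2) * normal_pdf 0 2 x))).
- by apply/measurable_EFinP; apply: meas_x2f; exact: meas_phi.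
- move=> x _ /=; rewrite lee_fin.
  have a0 : 0 <= x ^+ 2 * gauss_phi x := mulr_ge0 (sqr_ge0 x) (ltW (phi_gt0 x)).
  rewrite (ger0_norm a0); apply: (le_trans (x2phi_bound x)); exact: ler_norm.
- exact/intgZ/intg_N.
Qed.

End Integrals.


Section Gibbs.
Context {R : realType}.
Local Notation mu := (@lebesgue_measure R).
Implicit Types f g h : R -> R.

Lemma intg_meas {f} : intg f -> measurable_fun setT f.
Proof. by move=> hf; apply/measurable_EFinP; exact: (measurable_int mu hf). Qed.

Lemma int_le {f g} : intg f -> intg g -> (forall x, f x <= g x) ->
  (\int[mu]_x (f x)%:E <= \int[mu]_x (g x)%:E)%E.
Proof. by move=> hf hg; apply: int_le_meas; exact: intg_meas. Qed.

Definition M2 : R := fine (\int[mu]_x (x ^+ 2 * gauss_phi x)%:E).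

Lemma M2E : (\int[mu]_x (x ^+ 2 * gauss_phi x)%:E = M2%:E)%E.
Proof. exact/intg_fin/intg_x2phi. Qed.

Lemma gibbs_ineq (sg : R) : 0 < sg -> - ln sg + (1 - sg ^-2) / 2 * M2 <= 0.
Proof.
move=> s0.
have hL : intg (fun x => - ln sg * gauss_phi x + (1 - sg ^-2) / 2 * (x ^+ 2 * gauss_phi x)).
  by apply: intgD; apply: intgZ; [exact: intg_phi|exact: intg_x2phi].
have hR : intg (fun x => normal_pdf 0 sg x - gauss_phi x).
  by apply: intgB; [exact: integrable_normal_pdf|exact: intg_phi].
have := int_le hL hR.
have pt : forall x, - ln sg * gauss_phi x + (1 - sg ^-2) / 2 * (x ^+ 2 * gauss_phi x) <=
    normal_pdf 0 sg x - gauss_phi x.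
  move=> x; have := gibbs_pt sg x s0.
  have -> : gauss_phi x * (- ln sg + x ^+ 2 / 2 * (1 - sg ^-2)) =
    - ln sg * gauss_phi x + (1 - sg ^-2) / 2 * (x ^+ 2 * gauss_phi x) by ring.
  by [].
move=> /(_ pt).
rewrite intD; [|exact: intgZ intg_phi|exact: intgZ intg_x2phi].
rewrite (intZ (- ln sg) intg_phi) (intZ ((1 - sg ^-2) / 2) intg_x2phi) int_phi M2E.
rewrite intB ?intg_phi//; last exact: integrable_normal_pdf.
rewrite integral_normal_pdf int_phi subee// mule1 -EFinM -EFinD lee_fin.
by [].
Qed.

Lemma M2_eq1 : M2 = 1.
Proof.
have h1 := @gibbs_ineq (2^-1) ltac:(by rewrite invr_gt0).
have M2p : 0 < M2.
  move: h1; rewrite lnV ?posrE// opprK exprVn invrK.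
  have l2 : 0 < ln (2 : R) by rewrite ln_gt0// ltr1n.
  move=> h1; have : (1 - 2 ^+ 2) / 2 * M2 <= - ln (2 : R) by lra.
  rewrite expr2; lra.
set r := Num.sqrt M2.
have r0 : 0 < r by rewrite sqrtr_gt0.
have rr : r ^+ 2 = M2 by rewrite sqr_sqrtr// ltW.
have h2 := gibbs_ineq _ r0.
have lr : ln r <= r - 1.
  have hx : -1 < r - 1 by lra.
  by have := le_ln1Dx hx; rewrite addrC subrK.
have e2 : (1 - r ^-2) / 2 * M2 = (M2 - 1) / 2.
  by rewrite -rr; field; rewrite gt_eqF.
rewrite e2 in h2.
have : (r - 1) ^+ 2 <= 0.
  rewrite -rr in h2; nra.
move=> h3.
have : r - 1 = 0.
  by apply/eqP; rewrite -sqrf_eq0; apply/eqP/le_anti; rewrite h3 sqr_ge0.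
move=> h4; have r1 : r = 1 by lra.
by rewrite -rr r1 expr1n.
Qed.

End Gibbs.


Section Main.
Context {R : realType}.
Local Notation mu := (@lebesgue_measure R).

Lemma meas_kl (p : R -> R) : measurable_fun setT p -> (forall x, 0 <= p x) ->
  measurable_fun setT (fun x => p x * ln (p x / gauss_phi x)).
Proof.
move=> mp p0.
apply: (eq_measurable_fun (fun x => p x * ln (p x) + p x * (LL + x ^+ 2 / 2))).
  by move=> x _; rewrite kl_simpl.
apply: measurable_funD; apply: measurable_funM => //.
  exact: measurableT_comp (@measurable_ln R) mp.
apply: measurable_funD => //; apply: measurable_funM => //.
Qed.

Lemma KL_bound (p : R -> R) (d e T : R) :
  measurable_fun setT p -> (forall x, 0 <= p x <= 1) ->
  (\int[mu]_x (p x)%:E = 1)%E -> (\int[mu]_x (x ^+ 2 * p x)%:E = 1)%E ->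
  (forall x, `|p x - gauss_phi x| <= d) ->
  0 < d -> d <= 2^-1 -> 0 < e < 1 -> 0 < T ->
  (KL_gauss p <= (3 / e * d `^ (1 - e) * (2 * T) + Ktail * expR (- T ^+ 2 / 8))%:E)%E.
Proof.
move=> mp p01 ip ix2p pd d0 d12 e01 T0.
have p0 x : 0 <= p x by case/andP: (p01 x).
set w := 3 / e * d `^ (1 - e).
set K' := Ktail * expR (- T ^+ 2 / 8).
have w0 : 0 <= w by rewrite /w mulr_ge0 ?powR_ge0// divr_ge0//; case/andP: e01 => /ltW.
pose f1 := fun x => w * \1_`[-T, T] x.
pose f2 := fun x => K' * normal_pdf 0 2 x.
pose f3 := fun x => LL * (p x - gauss_phi x).
pose f4 := fun x => x ^+ 2 / 2 * (p x - gauss_phi x).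
have intp : intg p by apply: intg_nonneg => //; rewrite ip ltry.
have intx2p : intg (fun x => x ^+ 2 * p x).
  apply: intg_nonneg; first exact: meas_x2f.
    by move=> x; rewrite mulr_ge0 ?sqr_ge0.
  by rewrite ix2p ltry.
have i1 : intg f1 by apply: intgZ; exact: integrable_indic_itv.
have i2 : intg f2 by apply: intgZ; exact: intg_N.
have i3 : intg f3 by apply: intgZ; apply: intgB => //; exact: intg_phi.
have i4' : intg (fun x => 2^-1 * (x ^+ 2 * p x - x ^+ 2 * gauss_phi x)).
  by apply: intgZ; apply: intgB => //; exact: intg_x2phi.
have i4 : intg f4.
  by apply: eq_integrable i4' => // x _ /=; rewrite /f4; congr EFin; ring.
have i12 : intg (fun x => f1 x + f2 x) by exact: intgD.
have i123 : intg (fun x => f1 x + f2 x + f3 x) by exact: intgD.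
have le1 : (KL_gauss p <= \int[mu]_x (f1 x + f2 x + f3 x + f4 x)%:E)%E.
  apply: int_le_meas; first exact: meas_kl.
    exact: intg_meas (intgD i123 i4).
  move=> x; rewrite /f1 /f2 /f3 /f4.
  apply: main_pt => //; exact: ltW.
apply: (le_trans le1).
rewrite (intD i123 i4) (intD i12 i3) (intD i1 i2).
have -> : (\int[mu]_x (f4 x)%:E = 0)%E.
  rewrite (_ : (fun x => (f4 x)%:E) = (fun x => (2^-1 * (x ^+ 2 * p x - x ^+ 2 * gauss_phi x))%:E)); last first.
    by apply/funext => x; rewrite /f4; congr EFin; ring.
  rewrite (intZ _ (intgB intx2p intg_x2phi)) (intB intx2p intg_x2phi) ix2p M2E M2_eq1.
  by rewrite subee// mule0.
have -> : (\int[mu]_x (f3 x)%:E = 0)%E.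
  rewrite (intZ _ (intgB intp intg_phi)) (intB intp intg_phi) ip int_phi.
  by rewrite subee// mule0.
have -> : (\int[mu]_x (f2 x)%:E = K'%:E)%E.
  by rewrite (intZ _ intg_N) integral_normal_pdf mule1.
have -> : (\int[mu]_x (f1 x)%:E = (w * (2 * T))%:E)%E.
  rewrite (intZ _ (integrable_indic_itv _ _ _ _)) integral_indic// setIT.
  have hm : mu `[-T, T] = (T - - T)%:E.
    by rewrite lebesgue_measure_itv/= lte_fin gtrN// -EFinD.
  transitivity (w%:E * (T - - T)%:E)%E; first by congr (_ * _)%E; exact: hm.
  by congr (EFin (_ * _)); ring.
by rewrite !adde0 -EFinD.
Qed.

End Main.


Section Final.
Context {R : realType}.
Implicit Types x y t z d e : R.

Lemma sqrt_le1D y : 0 <= y -> Num.sqrt y <= 1 + y.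
Proof.
move=> y0; have r0 := sqrtr_ge0 y; have rr := sqr_sqrtr y0.
set r := Num.sqrt y in r0 rr *; rewrite -rr; nra.
Qed.

Lemma c0_le_half : @c0 R <= 2^-1.
Proof.
rewrite /c0 lef_pV2 ?posrE ?sqrtr_gt0 ?mulr_gt0 ?pi_gt0//.
have h : 4 <= 2 * pi :> R by have := @pi_ge2 R; lra.
have s4 : Num.sqrt (4 : R) = 2.
  have -> : (4 : R) = 2 ^+ 2 by rewrite expr2; lra.
  by rewrite sqrtr_sqr ger0_norm.
rewrite -[X in X <= _]s4 ler_sqrt//; lra.
Qed.

Lemma young t th : 0 < th <= 1 -> 0 <= t -> t `^ th <= th * t + (1 - th).
Proof.
move=> /andP[th0 th1]; rewrite le_eqVlt => /predU1P[<-|t0].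
  by rewrite powR0 ?gt_eqF// mulr0 add0r subr_ge0.
set u := ln t.
have tE : t = expR u by rewrite /u lnK.
rewrite tE -expRM mulrC.
have tan z : expR (th * u) * (1 + z - th * u) <= expR z.
  have -> : expR z = expR (th * u) * expR (z - th * u) by rewrite -expRD subrKC.
  by rewrite ler_pM2l ?expR_gt0// -addrA expR_ge1Dx.
have h1 := tan u.
have h2 := tan 0.
rewrite expR0 in h2.
have E := expR_gt0 (th * u).
have : th * (expR (th * u) * (1 + u - th * u)) <= th * expR u by rewrite ler_pM2l.
have : (1 - th) * (expR (th * u) * (1 + 0 - th * u)) <= (1 - th) * 1.
  by rewrite ler_wpM2l// subr_ge0.
have -> : th * expR u + (1 - th) = th * expR u + (1 - th) * 1 by rewrite mulr1.
set X := expR (th * u); set Y := expR u.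
move=> a b.
have : X = th * (X * (1 + u - th * u)) + (1 - th) * (X * (1 + 0 - th * u)) by ring.
lra.
Qed.

Lemma pow_ge_c a y c : 0 < a <= 1 -> 0 <= y -> c <= 1 -> c <= y -> c <= y `^ a.
Proof.
move=> /andP[a0 a1] y0 c1 cy; have [y1|y1] := leP 1 y.
  apply: (le_trans c1).
  have := ler_powR (x := 0) (y := a) y1.
  by rewrite powRr0 => ->//; rewrite ltW.
apply: (le_trans cy).
have [yz|yp] := eqVneq y 0; first by rewrite yz powR_ge0.
by apply: ger1_powR => //; rewrite (ltW y1) andbT lt_neqAle eq_sym yp y0.
Qed.

Lemma pow_le1D a z : 0 <= a <= 1 -> 0 <= z -> z `^ a <= 1 + z.
Proof.
move=> /andP[a0 a1] z0; have [z1|z1] := leP 1 z.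
  by apply: (le_trans (ler1_powR z1 a1)); rewrite lerDr.
apply: (@le_trans _ _ 1); last by rewrite lerDl.
have := @ge0_ler_powR _ a a0 z 1; rewrite powR1 => -> //; rewrite ?nnegrE ?ltW//.
Qed.

Lemma T_exp d : 0 < d < 1 ->
  expR (- (Num.sqrt (- 8 * ln d)) ^+ 2 / 8) = d.
Proof.
move=> /andP[d0 d1].
have l0 : ln d < 0 by rewrite ln_lt0// d0.
rewrite sqr_sqrtr; last by rewrite mulr_le0 ?ltW//; lra.
by rewrite (_ : - (- 8 * ln d) / 8 = ln d) ?lnK// ; field.
Qed.

Lemma final_bound d e : 0 < d <= 2^-1 -> 0 < e ->
  3 / e * d `^ (1 - e) * (2 * Num.sqrt (- 8 * ln d)) + Ktail * d
  <= (6 / e * (1 + 8 / e) + Ktail) * d `^ (1 - 2 * e).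
Proof.
move=> /andP[d0 d12] e0.
have d1 : d <= 1 by apply: (le_trans d12); rewrite invf_le1// ler1n.
have l0 : 0 <= - ln d by rewrite oppr_ge0 ln_le0.
have sq := sqrt_le1D (- 8 * ln d) ltac:(lra).
have dsplit : d `^ (1 - e) = d `^ (1 - 2 * e) * d `^ e.
  have := @powRD R d (1 - 2 * e) e; rewrite (gt_eqF d0) implybT.
  by move=> /(_ isT) <-; congr powR; ring.
have xl := @xpow_ln R e d e0 ltac:(by rewrite d0 d1).
have P0 : 0 <= d `^ (1 - 2 * e) := powR_ge0 _ _.
have Pe0 : 0 <= d `^ e := powR_ge0 _ _.
have D1 : d `^ (1 - e) <= d `^ (1 - 2 * e).
  by apply: ger_powR; [rewrite d0 d1|lra].
have D2 : d <= d `^ (1 - 2 * e).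
  by apply: ger1_powR; [rewrite d0 d1|lra].
have K0 := @Ktail_ge0 R.
have ei : 0 < e^-1 by rewrite invr_gt0.
have A1 : d `^ (1 - e) * Num.sqrt (- 8 * ln d) <= d `^ (1 - 2 * e) * (1 + 8 / e).
  apply: (@le_trans _ _ (d `^ (1 - e) * (1 + - 8 * ln d))).
    by rewrite ler_wpM2l ?powR_ge0.
  have -> : d `^ (1 - e) * (1 + - 8 * ln d) = d `^ (1 - e) + 8 * (d `^ (1 - 2 * e) * (d `^ e * - ln d)).
    by rewrite dsplit; ring.
  have : d `^ (1 - 2 * e) * (d `^ e * - ln d) <= d `^ (1 - 2 * e) * e^-1 by rewrite ler_wpM2l.
  move=> h; rewrite mulrDr mulr1.
  have -> : d `^ (1 - 2 * e) * (8 / e) = 8 * (d `^ (1 - 2 * e) / e) by rewrite mulrCA.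
  lra.
have -> : 3 / e * d `^ (1 - e) * (2 * Num.sqrt (- 8 * ln d)) =
  6 / e * (d `^ (1 - e) * Num.sqrt (- 8 * ln d)) by ring.
have B1 : 6 / e * (d `^ (1 - e) * Num.sqrt (- 8 * ln d)) <= 6 / e * (d `^ (1 - 2 * e) * (1 + 8 / e)).
  by rewrite ler_wpM2l// divr_ge0// ltW.
have B2 : Ktail * d <= Ktail * d `^ (1 - 2 * e) by rewrite ler_wpM2l.
have E : 6 / e * (d `^ (1 - 2 * e) * (1 + 8 / e)) = 6 / e * (1 + 8 / e) * d `^ (1 - 2 * e) by ring.
rewrite E in B1; rewrite mulrDl; lra.
Qed.

End Final.


Section Support.
Context {R : realType}.
Local Notation mu := (@lebesgue_measure R).

Definition Sset (eps : R) := [set x `^ eps * Num.sqrt `|ln x| | x in `[(0:R), 1]].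

Lemma pow_le1 (x eps : R) : 0 < eps -> 0 <= x <= 1 -> x `^ eps <= 1.
Proof.
move=> e0 /andP[x0 x1].
have := @ge0_ler_powR _ eps (ltW e0) x 1; rewrite powR1 => -> //; rewrite nnegrE//.
Qed.

Lemma Sset_elem (eps x : R) : 0 <= x <= 1 -> Sset eps (x `^ eps * Num.sqrt `|ln x|).
Proof. by move=> hx; exists x => //=; rewrite in_itv /=. Qed.

Lemma Sset_bound (eps : R) z : 0 < eps -> Sset eps z -> 0 <= z <= 1 + eps^-1.
Proof.
move=> e0 [x]; rewrite /= in_itv /= => /andP[x0 x1] <-.
rewrite mulr_ge0 ?powR_ge0 ?sqrtr_ge0 //=.
have [->|xp] := eqVneq x 0.
  by rewrite powR0 ?gt_eqF// mul0r addr_ge0// invr_ge0 ltW.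
have xp' : 0 < x by rewrite lt_neqAle eq_sym xp x0.
have hl : `|ln x| = - ln x by rewrite ler0_norm// ln_le0.
rewrite hl.
have sq := sqrt_le1D (- ln x) ltac:(by rewrite oppr_ge0 ln_le0).
have xl := @xpow_ln R eps x e0 ltac:(by rewrite xp' x1).
have p1 := @pow_le1 x eps e0 ltac:(by rewrite x0 x1).
have P0 := powR_ge0 x eps.
apply: (@le_trans _ _ (x `^ eps * (1 + - ln x))); first by rewrite ler_wpM2l.
rewrite mulrDr mulr1; lra.
Qed.

Lemma Sset_has_sup (eps : R) : 0 < eps -> has_sup (Sset eps).
Proof.
move=> e0; split.
  exists (1 `^ eps * Num.sqrt `|ln 1|); apply: Sset_elem; by rewrite ler01 lexx.
exists (1 + eps^-1) => z Sz.
by case/andP: (Sset_bound _ _ e0 Sz).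
Qed.

Lemma Sset_ub (eps x : R) : 0 < eps -> 0 <= x <= 1 ->
  x `^ eps * Num.sqrt `|ln x| <= sup (Sset eps).
Proof.
move=> e0 hx; apply: sup_upper_bound; first exact: Sset_has_sup.
exact: Sset_elem.
Qed.

Lemma Meps_ge1 (eps : R) : 0 < eps -> 1 <= Meps eps.
Proof.
move=> e0; rewrite /Meps lerDr.
have h := @Sset_ub eps 1 e0 ltac:(by rewrite ler01 lexx).
rewrite ln1 normr0 sqrtr0 mulr0 in h.
exact: h.
Qed.

Lemma second_ineq (eps n a : R) : 0 < eps -> 0 <= n <= 1 -> 0 < a <= 1 ->
  (Num.sqrt `|ln n| * n) `^ a <= Meps eps * n `^ (a * (1 - eps)).
Proof.
move=> e0 /andP[n0 n1] /andP[a0 a1].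
have M1 := Meps_ge1 _ e0.
have [->|np] := eqVneq n 0.
  rewrite mulr0 [X in X <= _]powR0 ?gt_eqF//.
  by rewrite mulr_ge0 ?powR_ge0// (le_trans ler01).
have np' : 0 < n by rewrite lt_neqAle eq_sym np n0.
set z := n `^ eps * Num.sqrt `|ln n|.
have z0 : 0 <= z by rewrite mulr_ge0 ?powR_ge0 ?sqrtr_ge0.
have zS : z <= sup (Sset eps) by apply: Sset_ub => //; rewrite n0 n1.
have -> : Num.sqrt `|ln n| * n = z * n `^ (1 - eps).
  rewrite /z mulrAC -mulrA.
  have := @powRD R n eps (1 - eps); rewrite (gt_eqF np') implybT addrC subrK powRr1 ?ltW//.
  by move=> /(_ isT) hh; rewrite mulrA -hh mulrC.
rewrite powRM ?powR_ge0// -powRrM [(1 - eps) * a]mulrC.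
apply: ler_wpM2r; first exact: powR_ge0.
apply: (le_trans (pow_le1D a z ltac:(by rewrite (ltW a0) a1) z0)).
by rewrite /Meps addrC lerD2r.
Qed.

End Support.


Section Last.
Context {R : realType}.
Local Notation mu := (@lebesgue_measure R).

Lemma supnorm_facts (p : R -> R) : (supnorm_diff p <= (1 / 2)%:E)%E ->
  0 <= fine (supnorm_diff p) <= 2^-1 /\
  forall x, `|p x - gauss_phi x| <= fine (supnorm_diff p).
Proof.
move=> hs.
have ub x : ((`|p x - gauss_phi x|)%:E <= supnorm_diff p)%E.
  by apply: ereal_sup_ubound; exists x.
have s0 : (0 <= supnorm_diff p)%E by apply: le_trans (ub 0); rewrite lee_fin.
have sf : supnorm_diff p = (fine (supnorm_diff p))%:E.
  rewrite fineK// ge0_fin_numE//; apply: le_lt_trans hs _; exact: ltry.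
split.
  by move: s0 hs; rewrite sf !lee_fin mul1r => -> ->.
by move=> x; have := ub x; rewrite [X in (_ <= X)%E]sf lee_fin.
Qed.

Lemma moment_ge1 (p : R -> R) (s : R) : 2 < s -> measurable_fun setT p ->
  (forall x, 0 <= p x) -> (\int[mu]_x (p x)%:E = 1)%E ->
  (\int[mu]_x (x ^+ 2 * p x)%:E = 1)%E -> (abs_moment p s < +oo)%E ->
  1 <= fine (abs_moment p s).
Proof.
move=> s2 mp p0 ip ix2p hm.
set th := 2 / s.
have s0 : 0 < s by lra.
have th0 : 0 < th by rewrite divr_gt0.
have th1 : th <= 1 by rewrite ler_pdivrMr//; lra.
have intp : intg p by apply: intg_nonneg => //; rewrite ip ltry.
have intx2p : intg (fun x => x ^+ 2 * p x).
  apply: intg_nonneg; first exact: meas_x2f.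
    by move=> x; rewrite mulr_ge0 ?sqr_ge0.
  by rewrite ix2p ltry.
have mq : measurable_fun setT (fun x : R => `|x| `^ s * p x).
  apply: measurable_funM => //.
  apply: (measurableT_comp (measurable_powR s)); exact: normr_measurable.
have q0 x : 0 <= `|x| `^ s * p x by rewrite mulr_ge0 ?powR_ge0.
have intq : intg (fun x => `|x| `^ s * p x) by apply: intg_nonneg.
have hmE : abs_moment p s = (fine (abs_moment p s))%:E.
  by rewrite /abs_moment -intg_fin.
have pt x : x ^+ 2 * p x <= th * (`|x| `^ s * p x) + (1 - th) * p x.
  have y := young (`|x| `^ s) th ltac:(by rewrite th0 th1) (powR_ge0 _ _).
  have e : (`|x| `^ s) `^ th = x ^+ 2.
    rewrite -powRrM /th mulrCA divff ?gt_eqF// mulr1.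
    rewrite (_ : (2 : R) = 2%:R)// powR_mulrn// -normrX ger0_norm// sqr_ge0.
    by [].
  rewrite e in y.
  have := p0 x; nra.
have := int_le intx2p (intgD (intgZ th intq) (intgZ (1 - th) intp)) pt.
rewrite ix2p (intD (intgZ th intq) (intgZ (1 - th) intp)) (intZ _ intq) (intZ _ intp) ip.
rewrite -[X in (_ * X + _)%E]/(abs_moment p s) hmE -!EFinM -EFinD lee_fin mulr1.
move=> h.
have : th * 1 <= th * fine (abs_moment p s) by lra.
by rewrite ler_pM2l.
Qed.

End Last.


Theorem corollary2p6 (R : realType) (s : R) (hs : 2 < s) :
  exists C1 : R, 0 < C1 /\
  forall p : R -> R,
    measurable_fun [set: R] p ->
    (forall x, 0 <= p x) ->
    (\int[@lebesgue_measure R]_x (p x)%:E = 1)%E ->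
    (\int[@lebesgue_measure R]_x (x * p x)%:E = 0)%E ->
    (\int[@lebesgue_measure R]_x (x ^+ 2 * p x)%:E = 1)%E ->
    (abs_moment p s < +oo)%E ->
    (supnorm_diff p <= (1 / 2)%:E)%E ->
    forall eps : R, 0 < eps ->
      let n := fine (supnorm_diff p) in
      let m := fine (abs_moment p s) in
      (KL_gauss p <=
         (C1 * m `^ (2 / s) * (Num.sqrt `|ln n| * n) `^ (1 - 2 / s))%:E)%E /\
      C1 * m `^ (2 / s) * (Num.sqrt `|ln n| * n) `^ (1 - 2 / s)
        <= C1 * Meps eps * m `^ (2 / s) * n `^ ((1 - 2 / s) * (1 - eps)).
Proof.
have s0 : 0 < s by lra.
set e := s^-1.
have e0 : 0 < e by rewrite invr_gt0.
have e12 : e < 2^-1 by rewrite ltf_pV2 ?posrE//; lra.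
set a := 1 - 2 / s.
have ae : a = 1 - 2 * e by [].
have a0 : 0 < a by rewrite /a subr_gt0 ltr_pdivrMr//; lra.
have a1 : a <= 1 by rewrite /a lerBlDr lerDl divr_ge0// ltW.
set K3 := 6 / e * (1 + 8 / e) + @Ktail R.
have K3p : 0 < K3.
  rewrite /K3; have := @Ktail_ge0 R.
  have : 0 < 6 / e * (1 + 8 / e) by rewrite mulr_gt0 ?divr_gt0// addr_gt0// divr_gt0.
  lra.
set l2 := Num.sqrt (ln (2 : R)).
have l20 : 0 < l2 by rewrite sqrtr_gt0 ln_gt0// ltr1n.
set cl := l2 / (1 + l2).
have cl0 : 0 < cl by rewrite divr_gt0// addr_gt0.
have cl1 : cl <= 1 by rewrite ler_pdivrMr ?addr_gt0//; lra.
have cll : cl <= l2.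
  by rewrite ler_pdivrMr ?addr_gt0//; nra.
exists (K3 / cl); split; first by rewrite divr_gt0.
move=> p mp p0 ip _ ix2p hm hsup eps eps0 n m.
have [/andP[n0 n12] pn] := supnorm_facts _ hsup.
rewrite -/n in n0 n12 pn.
have n1 : n <= 1 by apply: (le_trans n12); rewrite invf_le1// ler1n.
have p01 x : 0 <= p x <= 1.
  rewrite p0 /=.
  have := pn x; have := @phi_le1 R x; have := @c0_le_half R.
  move=> h1 h2 h3; have := ler_norm (p x - gauss_phi x).
  lra.
have m1 : 1 <= m by apply: moment_ge1.
have mp1 : 1 <= m `^ (2 / s).
  have := ler_powR (x := 0) (y := 2 / s) m1; rewrite powRr0 => -> //.
  by rewrite divr_ge0// ltW.
have C0 : 0 <= K3 / cl by rewrite divr_ge0// ltW.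
split.
  have [n00|np] := eqVneq n 0.
    have pE x : p x = gauss_phi x.
      by have := pn x; rewrite n00 normr_le0 subr_eq0 => /eqP.
    rewrite /KL_gauss.
    under eq_integral do rewrite pE divff ?gt_eqF ?phi_gt0// ln1 mulr0.
    rewrite integral0 n00 mulr0 powR0 ?gt_eqF// mulr0.
    by [].
  have np' : 0 < n by rewrite lt_neqAle eq_sym np n0.
  have nlt1 : n < 1 by apply: (le_lt_trans n12); rewrite invf_lt1// ltr1n.
  have ln0 : ln n < 0 by rewrite ln_lt0// np'.
  set T := Num.sqrt (- 8 * ln n).
  have T0 : 0 < T by rewrite sqrtr_gt0; lra.
  have kb := KL_bound p n e T mp p01 ip ix2p pn np' n12
    ltac:(by rewrite e0 /=; apply: (lt_trans e12); rewrite invf_lt1// ltr1n) T0.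
  rewrite T_exp ?np' ?nlt1// in kb.
  apply: (le_trans kb); rewrite lee_fin.
  have fb := final_bound n e ltac:(by rewrite np' n12) e0.
  rewrite -/T -ae in fb; apply: (le_trans fb).
  have lnb : ln 2 <= `|ln n|.
    rewrite (ler0_norm (ltW ln0)) -lnV ?posrE// ler_ln ?posrE ?invr_gt0//.
    have h2n : 2 * n <= 1 by lra.
    by rewrite -(ler_pM2r np') mulVf ?gt_eqF.
  have sqb : l2 <= Num.sqrt `|ln n| by rewrite ler_sqrt// normr_ge0.
  have pc : cl <= Num.sqrt `|ln n| `^ a.
    apply: (@pow_ge_c R a (Num.sqrt `|ln n|) cl); [by rewrite a0 a1|exact: sqrtr_ge0|exact: cl1|exact: le_trans cll sqb].
  rewrite (powRM _ (sqrtr_ge0 _) n0).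
  have na0 : 0 <= n `^ a := powR_ge0 _ _.
  have : K3 * n `^ a = K3 / cl * 1 * (cl * n `^ a) by field; rewrite gt_eqF.
  move=> ->.
  apply: ler_pM; [by rewrite mulr1|exact: (mulr_ge0 (ltW cl0) na0)|by rewrite (ler_pM2l (divr_gt0 K3p cl0))|by rewrite (ler_pM2r (powR_gt0 _ np'))].
have := second_ineq eps n a eps0 ltac:(by rewrite n0 n1) ltac:(by rewrite a0 a1).
move=> h.
have Cm : 0 <= K3 / cl * m `^ (2 / s) by rewrite mulr_ge0 ?powR_ge0.
have := ler_wpM2l Cm h.
have -> : K3 / cl * m `^ (2 / s) * (Meps eps * n `^ (a * (1 - eps))) =
  K3 / cl * Meps eps * m `^ (2 / s) * n `^ (a * (1 - eps)) by ring.
by [].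
Qed.
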